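(* Let $n\in\mathbb N$ and $x_0\le x_1\le\dots\le x_n$ real numbers. For $j=1,\dots,n$ let $\widehat f_j\in C^\infty([x_{j-1},x_j])$ ($\mathbb F$-valued). Assume that $\widehat f_i^{(k)}(x_i)=\widehat f_{i+1}^{(k)}(x_i)$ for all $0\le k\le i-1$ and all $i\in\{1,\dots,n-1\}$. Then for every $\delta>0$ there exists $F\in C^{n-1}([x_0,x_n])$ such that for all $k=0,\dots,n-1$, $$|F^{(k)}(x)-\widehat f_j^{(k)}(x)|<\delta\quad\text{for all }x\in[x_{j-1},x_j]\text{ and all }j\in\{k+1,\dots,n\}.$$
   Context: $\mathbb F\in\{\mathbb R,\mathbb C\}$. Convention for possibly degenerate intervals: for $\alpha<\beta$, $C^m([\alpha,\beta])$ (resp. $C^\infty([\alpha,\beta])$) is the space of $m$-times continuously (resp. infinitely) differentiable functions on $[\alpha,\beta]$ with one-sided derivatives at the endpoints. For a degenerate interval $\{\alpha\}$, $C^m(\{\alpha\})$ is identified with $\mathbb F^{m+1}$ and $C^\infty(\{\alpha\})$ with the space of sequences $(a_k)_{k\ge0}\subset\mathbb F$, with the notation $f^{(k)}(\alpha)=a_k$. *)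

(* Defs.v *)
From Stdlib Require Import Reals.
From Coquelicot Require Import Coquelicot.
Open Scope R_scope.

Definition Icc (a b : R) (y : R) : Prop := a <= y <= b.

(* On a nondegenerate closed interval this is the usual derivative in the
   interior and the one-sided derivative at the endpoints. *)
Definition is_derive_within {V : NormedModule R_AbsRing}
  (D : R -> Prop) (f : R -> V) (x : R) (l : V) : Prop :=
  filterlim (fun y => scal (/ (y - x)) (minus (f y) (f x)))
    (within (fun y => D y /\ y <> x) (locally x)) (locally l).

Definition continuous_within {V : NormedModule R_AbsRing}
  (D : R -> Prop) (f : R -> V) (x : R) : Prop :=
  filterlim f (within D (locally x)) (locally (f x)).

(* An element of C^m([a,b]) is represented by the family of its derivatives
   g 0, g 1, ..., g m (g k plays the role of the k-th derivative; indices > m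
   are irrelevant).
   If a = b (degenerate interval {a}), following the paper's convention
   C^m({a}) = F^(m+1), the values g k a (k <= m) are arbitrary. *)
Definition Cm_on {V : NormedModule R_AbsRing} (m : nat) (a b : R)
  (g : nat -> R -> V) : Prop :=
  a < b ->
  (forall k, (k <= m)%nat -> forall x, Icc a b x ->
       continuous_within (Icc a b) (g k) x) /\
  (forall k, (k < m)%nat -> forall x, Icc a b x ->
       is_derive_within (Icc a b) (g k) x (g (S k) x)).

Definition Cinf_on {V : NormedModule R_AbsRing} (a b : R)
  (g : nat -> R -> V) : Prop :=
  forall m, Cm_on m a b g.

(* The statement of the theorem for values in V (V = R or V = C). 
   fh j k is the k-th derivative of \hat f_j; Fd k is F^(k). *)
Definition approx_statement (V : NormedModule R_AbsRing) : Prop :=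
  forall (n : nat) (x : nat -> R),
  (forall i, (i < n)%nat -> x i <= x (S i)) ->
  forall fh : nat -> nat -> R -> V,
  (forall j, (1 <= j <= n)%nat -> Cinf_on (x (j - 1)%nat) (x j) (fh j)) ->
  (forall i, (1 <= i <= n - 1)%nat -> forall k, (k <= i - 1)%nat ->
       fh i k (x i) = fh (S i) k (x i)) ->
  forall delta : R, 0 < delta ->
  exists Fd : nat -> R -> V,
    Cm_on (n - 1) (x 0%nat) (x n) Fd /\
    forall k, (k <= n - 1)%nat ->
    forall j, (k + 1 <= j <= n)%nat ->
    forall y, Icc (x (j - 1)%nat) (x j) y ->
      norm (minus (Fd k y) (fh j k y)) < delta.

(* Main.v *)
Require Import Defs.
From Stdlib Require Import Reals Lra Lia.
From Coquelicot Require Import Coquelicot.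
Open Scope R_scope.

Lemma within_union {U : UniformSpace} (f : R -> U) (P Q S : R -> Prop) y L :
  filterlim f (within P (locally y)) (locally L) ->
  filterlim f (within Q (locally y)) (locally L) ->
  (forall z, S z -> P z \/ Q z) ->
  filterlim f (within S (locally y)) (locally L).
Proof.
  intros HP HQ HS A HA.
  specialize (HP A HA). specialize (HQ A HA).
  unfold filtermap, within in *. simpl in *.
  generalize (filter_and _ _ HP HQ). apply filter_imp.
  intros z [H1 H2] Hz. destruct (HS z Hz); auto.
Qed.

Lemma within_out {U : UniformSpace} (f : R -> U) (P : R -> Prop) a b y L :
  (forall z, P z -> Icc a b z) -> ~ Icc a b y ->
  filterlim f (within P (locally y)) L.
Proof.
  intros HP Hy A HA. unfold within, filtermap.
  assert (Hd : 0 < Rmax (a - y) (y - b)).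
  { unfold Icc in Hy. apply Rnot_le_lt. intro H.
    apply Hy. generalize (Rmax_l (a-y) (y-b)) (Rmax_r (a-y) (y-b)). lra. }
  exists (mkposreal _ Hd). intros z Hz Pz.
  exfalso. apply HP in Pz. unfold Icc in Pz.
  change (Rabs (z - y) < Rmax (a - y) (y - b)) in Hz.
  apply Rabs_def2 in Hz. destruct Hz.
  unfold Rmax in *. destruct (Rle_dec (a-y) (y-b)); lra.
Qed.

Lemma within_point {U : UniformSpace} (f : R -> U) (P : R -> Prop) y :
  (forall z, P z -> z = y) ->
  filterlim f (within P (locally y)) (locally (f y)).
Proof.
  intros HP A HA. unfold within, filtermap.
  apply filter_forall. intros z Pz. rewrite (HP z Pz).
  now apply locally_singleton.
Qed.
Definition CmAt {V : NormedModule R_AbsRing} (N : nat) (D : R -> Prop)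
  (f : nat -> R -> V) (y : R) : Prop :=
  (forall k, (k <= N)%nat -> continuous_within D (f k) y) /\
  (forall k, (k < N)%nat -> is_derive_within D (f k) y (f (S k) y)).

Lemma Cm_on_of {V : NormedModule R_AbsRing} N a b (f : nat -> R -> V) :
  (a < b -> forall y, Icc a b y -> CmAt N (Icc a b) f y) -> Cm_on N a b f.
Proof.
  intros H Hab. split; intros k Hk y Hy; apply (H Hab y Hy); auto.
Qed.

Lemma Cm_on_to {V : NormedModule R_AbsRing} N a b (f : nat -> R -> V) :
  Cm_on N a b f -> a < b -> forall y, Icc a b y -> CmAt N (Icc a b) f y.
Proof.
  intros H Hab y Hy. destruct (H Hab) as [H1 H2]. split; intros k Hk; auto.
Qed.

Lemma CmAt_mono {V : NormedModule R_AbsRing} N M D (f : nat -> R -> V) y :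
  (N <= M)%nat -> CmAt M D f y -> CmAt N D f y.
Proof. intros HNM [H1 H2]; split; intros k Hk; [apply H1|apply H2]; lia. Qed.

Lemma CmAt_ext {V : NormedModule R_AbsRing} N D (f g : nat -> R -> V) y :
  (forall z, D z -> forall k, (k <= N)%nat -> f k z = g k z) -> D y ->
  CmAt N D g y -> CmAt N D f y.
Proof.
  intros He Dy [H1 H2]. split.
  - intros k Hk. unfold continuous_within.
    rewrite (He y Dy k Hk).
    apply filterlim_within_ext with (f := g k).
    + intros z Dz. symmetry. auto.
    + apply H1; auto.
  - intros k Hk. unfold is_derive_within.
    rewrite (He y Dy (S k) Hk).
    eapply filterlim_within_ext. 2: apply (H2 k Hk).
    intros z [Dz _]. simpl. rewrite (He z Dz k), (He y Dy k); auto; lia.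
Qed.

Lemma minus_plus_plus {G : AbelianGroup} (a b a' b' : G) :
  minus (plus a b) (plus a' b') = plus (minus a a') (minus b b').
Proof.
  unfold minus. rewrite opp_plus.
  rewrite <- !plus_assoc. f_equal. rewrite !plus_assoc. f_equal.
  apply plus_comm.
Qed.

Lemma alg_quot_plus {V : NormedModule R_AbsRing} (c : R) (a b a' b' : V) :
  scal c (minus (plus a b) (plus a' b')) =
  plus (scal c (minus a a')) (scal c (minus b b')).
Proof.
  rewrite <- (@scal_distr_l R_Ring). f_equal. exact (@minus_plus_plus (NormedModule.AbelianGroup R_AbsRing V) a b a' b').
Qed.

Lemma CmAt_plus {V : NormedModule R_AbsRing} N D (f g : nat -> R -> V) y :
  CmAt N D f y -> CmAt N D g y ->
  CmAt N D (fun k z => plus (f k z) (g k z)) y.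
Proof.
  intros [F1 F2] [G1 G2]. split.
  - intros k Hk. unfold continuous_within.
    eapply filterlim_comp_2. apply F1; auto. apply G1; auto.
    apply filterlim_plus.
  - intros k Hk. unfold is_derive_within.
    eapply filterlim_ext.
    { intro z. symmetry. apply alg_quot_plus. }
    eapply filterlim_comp_2. apply F2; auto. apply G2; auto.
    apply (filterlim_plus (V:=V)).
Qed.

Lemma alg_quot_scal {V : NormedModule R_AbsRing} (c a a' : R) (v : V) :
  scal c (minus (scal a v) (scal a' v)) = scal (c * (a - a')) v.
Proof.
  rewrite <- (@scal_minus_distr_r R_AbsRing). rewrite scal_assoc. reflexivity.
Qed.

Lemma CmAt_scal {V : NormedModule R_AbsRing} N D (h : nat -> R -> R) (v : V) y :
  CmAt (V := R_NormedModule) N D h y ->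
  CmAt N D (fun k z => scal (h k z) v) y.
Proof.
  intros [F1 F2]. split.
  - intros k Hk. unfold continuous_within.
    apply (filterlim_comp _ _ _ (h k) (fun t : R => scal t v) (within D (locally y)) (locally (h k y))).
    apply F1; auto. apply (filterlim_scal_l (V:=V)).
  - intros k Hk. unfold is_derive_within.
    eapply filterlim_ext.
    { intro z. symmetry. apply alg_quot_scal. }
    eapply (filterlim_comp _ _ _ _ (fun t : R => scal t v) _ (locally (h (S k) y))). apply (F2 k Hk).
    apply (filterlim_scal_l (V:=V)).
Qed.

Lemma CmAt_glue {V : NormedModule R_AbsRing} N a m b (f : nat -> R -> V) :
  (forall y, Icc a m y -> CmAt N (Icc a m) f y) ->
  (forall y, Icc m b y -> CmAt N (Icc m b) f y) ->
  forall y, Icc a b y -> CmAt N (Icc a b) f y.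
Proof.
  intros HA HB y Hy. split.
  - intros k Hk. unfold continuous_within.
    apply within_union with (P := Icc a m) (Q := Icc m b).
    + destruct (Rle_dec y m) as [Hl|Hl].
      * apply (HA y). unfold Icc in *; lra. auto.
      * apply within_out with a m; auto. unfold Icc; lra.
    + destruct (Rle_dec m y) as [Hl|Hl].
      * apply (HB y). unfold Icc in *; lra. auto.
      * apply within_out with m b; auto. unfold Icc; lra.
    + intros z Hz. unfold Icc in *. destruct (Rle_dec z m); [left|right]; lra.
  - intros k Hk. unfold is_derive_within.
    apply within_union with (P := fun z => Icc a m z /\ z <> y)
                            (Q := fun z => Icc m b z /\ z <> y).
    + destruct (Rle_dec y m) as [Hl|Hl].
      * apply (HA y). unfold Icc in *; lra. auto.
      * apply within_out with a m; [intros z [Hz _]; auto|]. unfold Icc; lra.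
    + destruct (Rle_dec m y) as [Hl|Hl].
      * apply (HB y). unfold Icc in *; lra. auto.
      * apply within_out with m b; [intros z [Hz _]; auto|]. unfold Icc; lra.
    + intros z [Hz Hzy]. unfold Icc in *. destruct (Rle_dec z m); [left|right]; split; auto; lra.
Qed.

Lemma CmAt_point {V : NormedModule R_AbsRing} N a (f : nat -> R -> V) :
  CmAt N (Icc a a) f a.
Proof.
  split.
  - intros k Hk. apply within_point. intros z Hz. unfold Icc in Hz; lra.
  - intros k Hk. unfold is_derive_within. intros A HA. unfold filtermap, within.
    apply filter_forall. intros z [Hz Hza]. unfold Icc in Hz. exfalso. lra.
Qed.
Lemma dR_mult f g x df dg : is_derive f x df -> is_derive g x dg ->
  is_derive (fun t => f t * g t) x (df * g x + f x * dg).
Proof.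
  intros H1 H2. apply is_derive_Reals. apply is_derive_Reals in H1, H2.
  exact (derivable_pt_lim_mult f g x df dg H1 H2).
Qed.

Lemma dR_plus f g x df dg : is_derive f x df -> is_derive g x dg ->
  is_derive (fun t => f t + g t) x (df + dg).
Proof.
  intros H1 H2. apply is_derive_Reals. apply is_derive_Reals in H1, H2.
  exact (derivable_pt_lim_plus f g x df dg H1 H2).
Qed.

Lemma dR_const a x : is_derive (fun _ : R => a) x 0.
Proof. apply is_derive_Reals. apply derivable_pt_lim_const. Qed.

Lemma dR_lin a b x : is_derive (fun t => a * t + b) x a.
Proof.
  auto_derive. auto. ring.
Qed.

Lemma dR_shift c x : is_derive (fun t => t - c) x 1.
Proof. auto_derive. auto. ring. Qed.

Lemma dR_eq (f : R -> R) (x l l' : R) : is_derive f x l -> l = l' -> is_derive f x l'.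
Proof. intros H ->; exact H. Qed.

Definition fam (g : nat -> R -> R) := forall k x, is_derive (g k) x (g (S k) x).

Definition mulfam (c : R) (g : nat -> R -> R) (k : nat) (x : R) : R :=
  (x - c) * g k x + INR k * g (pred k) x.

Definition onefam (k : nat) (x : R) : R := match k with O => 1 | _ => 0 end.

Lemma fam_one : fam onefam.
Proof. intros k x. destruct k; simpl; apply dR_const. Qed.

Lemma fam_mul c g : fam g -> fam (mulfam c g).
Proof.
  intros H k x. unfold mulfam.
  eapply dR_eq.
  - apply dR_plus. apply dR_mult.
    + apply dR_shift.
    + apply H.
    + apply dR_mult. apply dR_const. apply H.
  - cbv beta. destruct k as [|k]; simpl pred.
    + simpl. ring.
    + rewrite (S_INR (S k)). ring.
Qed.

Lemma fam_iter c g m : fam g -> fam (Nat.iter m (mulfam c) g).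
Proof. intros H. induction m; simpl; auto. apply fam_mul; auto. Qed.

Definition vanish (g : nat -> R -> R) c m := forall k, (k < m)%nat -> g k c = 0.

Lemma vanish_mul_same c g m : vanish g c m -> vanish (mulfam c g) c (S m).
Proof.
  intros H k Hk. unfold mulfam. destruct k as [|k].
  - simpl. ring.
  - simpl pred. rewrite (H k) by lia. ring.
Qed.

Lemma vanish_mul_other c c' g m : vanish g c' m -> vanish (mulfam c g) c' m.
Proof.
  intros H k Hk. unfold mulfam. destruct k as [|k].
  - simpl. rewrite (H 0%nat) by lia. ring.
  - simpl pred. rewrite (H k), (H (S k)) by lia. ring.
Qed.

Lemma vanish_iter_same c g m : vanish (Nat.iter m (mulfam c) g) c m.
Proof.
  induction m; simpl.
  - intros k Hk; lia.
  - apply vanish_mul_same; auto.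
Qed.

Lemma vanish_iter_other c c' g m p : vanish g c' p -> vanish (Nat.iter m (mulfam c) g) c' p.
Proof.
  intros H. induction m; simpl; auto. apply vanish_mul_other; auto.
Qed.

Lemma val0_iter g m : g 0%nat 0 = 1 -> Nat.iter m (mulfam (-1)) g 0%nat 0 = 1.
Proof.
  intros H. induction m as [|m IHm]; [exact H|].
  change (mulfam (-1) (Nat.iter m (mulfam (-1)) g) 0%nat 0 = 1).
  unfold mulfam at 1. rewrite IHm. simpl. ring.
Qed.

Lemma valm_iter g m : g 0%nat 0 <> 0 -> Nat.iter m (mulfam 0) g m 0 <> 0.
Proof.
  intros H. induction m as [|m IHm]; [exact H|].
  change (mulfam 0 (Nat.iter m (mulfam 0) g) (S m) 0 <> 0).
  unfold mulfam at 1. simpl pred.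
  replace (0 - 0) with 0 by ring. rewrite Rmult_0_l, Rplus_0_l.
  apply Rmult_integral_contrapositive. split; auto.
  apply not_0_INR. lia.
Qed.

Definition bnd (g : nat -> R -> R) :=
  forall K, exists M, forall k, (k <= K)%nat -> forall s, -1 <= s <= 0 -> Rabs (g k s) <= M.

Lemma bnd_one : bnd onefam.
Proof.
  intros K. exists 1. intros k Hk s Hs. destruct k; simpl; rewrite ?Rabs_R1, ?Rabs_R0; lra.
Qed.

Lemma bnd_mul c g : -1 <= c <= 0 -> bnd g -> bnd (mulfam c g).
Proof.
  intros Hc H K. destruct (H K) as [M HM]. exists (M + INR K * M).
  intros k Hk s Hs. unfold mulfam.
  assert (HM0 : 0 <= M). { specialize (HM 0%nat ltac:(lia) 0 ltac:(lra)). 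
    eapply Rle_trans. apply Rabs_pos. exact HM. }
  eapply Rle_trans. apply Rabs_triang.
  rewrite !Rabs_mult.
  apply Rplus_le_compat.
  - rewrite <- (Rmult_1_l M). apply Rmult_le_compat; try apply Rabs_pos.
    apply Rabs_le. lra. apply HM; auto.
  - apply Rmult_le_compat; try apply Rabs_pos.
    rewrite Rabs_right. apply le_INR; auto. apply Rle_ge, pos_INR.
    apply HM; auto. lia.
Qed.

Lemma bnd_iter c g m : -1 <= c <= 0 -> bnd g -> bnd (Nat.iter m (mulfam c) g).
Proof. intros Hc H. induction m; simpl; auto. apply bnd_mul; auto. Qed.
Lemma CmAt_of_fam (g : nat -> R -> R) N D y :
  fam g -> CmAt (V := R_NormedModule) N D g y.
Proof.
  intros Hg. split.
  - intros k Hk. unfold continuous_within.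
    eapply filterlim_filter_le_1.
    apply (filter_le_within (F := locally y)).
    apply ex_derive_continuous. exists (g (S k) y). apply Hg.
  - intros k Hk. unfold is_derive_within.
    assert (Hd := Hg k y). apply is_derive_Reals in Hd.
    intros P [eps HP]. unfold filtermap, within.
    destruct (Hd eps (cond_pos eps)) as [del Hdel].
    exists del. intros z Hz [Dz Hzy]. apply HP.
    change (Rabs (/ (z - y) * (g k z - g k y) - g (S k) y) < eps).
    change (Rabs (z - y) < del) in Hz.
    assert (Hne : z - y <> 0) by (intro; apply Hzy; lra).
    specialize (Hdel (z - y) Hne Hz). simpl in z. replace (y + (z - y)) with z in Hdel by ring.
    replace (/ (z - y) * (g k z - g k y)) with ((g k z - g k y) / (z - y)) by (field; auto).
    exact Hdel.
Qed.

Definition zerofam (k : nat) (x : R) : R := 0.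
Lemma fam_zero : fam zerofam.
Proof. intros k x. apply dR_const. Qed.

Lemma fam_scale (Q : nat -> R -> R) (c e b : R) : e <> 0 -> fam Q ->
  fam (fun k y => c * (/ e) ^ k * Q k ((y - b) / e)).
Proof.
  intros He HQ k y.
  assert (Hl : is_derive (fun y => (y - b) / e) y (/ e)).
  { auto_derive. auto. field. auto. }
  assert (Hc := is_derive_comp (Q k) (fun y => (y - b) / e) y _ _ (HQ k ((y - b) / e)) Hl).
  apply (is_derive_scal _ _ (c * (/ e) ^ k)) in Hc.
  eapply dR_eq. exact Hc. simpl. change (scal (/ e) (Q (S k) ((y - b) / e))) with (/ e * Q (S k) ((y - b) / e)). ring.
Qed.
Lemma pow_le1 (e : R) (t : nat) : 0 <= e <= 1 -> e ^ t <= 1.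
Proof.
  intros He. induction t; simpl. lra.
  assert (0 <= e ^ t) by (apply pow_le; lra). nra.
Qed.

Lemma pow_inv_prod (e : R) (k p : nat) : 0 < e <= 1 -> (k < p)%nat ->
  e ^ p * (/ e) ^ k <= e.
Proof.
  intros He Hkp. replace p with (k + S (p - S k))%nat by lia.
  rewrite pow_add.
  replace (e ^ k * e ^ S (p - S k) * (/ e) ^ k) with ((e * / e) ^ k * e ^ S (p - S k))
    by (rewrite Rpow_mult_distr; ring).
  rewrite Rinv_r by lra. rewrite pow1. simpl.
  assert (e ^ (p - S k) <= 1) by (apply pow_le1; lra).
  nra.
Qed.

Lemma bump (a b : R) (N r p : nat) (eta : R) :
  a < b -> (r < p)%nat -> (p <= N)%nat -> 0 < eta ->
  exists h : nat -> R -> R,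
    (forall y, Icc a b y -> CmAt (V := R_NormedModule) N (Icc a b) h y) /\
    (forall k, (k < p)%nat -> h k b = 0) /\ h p b = 1 /\
    (forall k, (k <= r)%nat -> h k a = 0) /\
    (forall k, (k <= r)%nat -> forall y, Icc a b y -> Rabs (h k y) < eta).
Proof.
  intros Hab Hrp HpN Heta.
  set (Q := Nat.iter p (mulfam 0) (Nat.iter (S N) (mulfam (-1)) onefam)).
  assert (HQf : fam Q) by (apply fam_iter, fam_iter, fam_one).
  assert (Hq0 : Q p 0 <> 0).
  { apply valm_iter. rewrite val0_iter; auto. }
  assert (HQ1 : vanish Q (-1) (S N)).
  { apply vanish_iter_other, vanish_iter_same. }
  assert (HQ0 : vanish Q 0 p) by apply vanish_iter_same.
  assert (HQb : bnd Q).
  { apply bnd_iter. lra. apply bnd_iter. lra. apply bnd_one. }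
  destruct (HQb N) as [M HM].
  set (M' := Rabs M + 1).
  assert (HM'0 : 0 < M') by (unfold M'; generalize (Rabs_pos M); lra).
  assert (Haq : 0 < Rabs (Q p 0)) by (apply Rabs_pos_lt; auto).
  set (e := Rmin ((b - a) / 2) (Rmin 1 (eta * Rabs (Q p 0) / (2 * M')))).
  assert (He1 : e <= (b - a) / 2) by apply Rmin_l.
  assert (He2 : e <= 1) by (eapply Rle_trans; [apply Rmin_r|apply Rmin_l]).
  assert (He3 : e <= eta * Rabs (Q p 0) / (2 * M'))
    by (eapply Rle_trans; [apply Rmin_r|apply Rmin_r]).
  assert (He0 : 0 < e).
  { unfold e. apply Rmin_pos. lra. apply Rmin_pos. lra.
    apply Rdiv_lt_0_compat. apply Rmult_lt_0_compat; lra. lra. }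
  set (c0 := e ^ p / Q p 0).
  set (H := fun k y => c0 * (/ e) ^ k * Q k ((y - b) / e)).
  assert (HHf : fam H) by (apply fam_scale; auto; lra).
  exists (fun k y => if Rle_dec y (b - e) then 0 else H k y).
  split; [|split; [|split; [|split]]].
  - apply CmAt_glue with (m := b - e).
    + intros y Hy. apply CmAt_ext with (g := zerofam).
      * intros z Hz k Hk. unfold Icc in Hz. destruct (Rle_dec z (b - e)); [reflexivity|lra].
      * auto.
      * apply CmAt_of_fam, fam_zero.
    + intros y Hy. apply CmAt_ext with (g := H).
      * intros z Hz k Hk. unfold Icc in Hz. destruct (Rle_dec z (b - e)); [|reflexivity].
        assert (z = b - e) by lra. subst z. unfold H.
        replace ((b - e - b) / e) with (-1) by (field; lra).
        rewrite (HQ1 k) by lia. rewrite Rmult_0_r. reflexivity.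
      * auto.
      * apply CmAt_of_fam, HHf.
  - intros k Hk. destruct (Rle_dec b (b - e)); [lra|]. unfold H.
    replace ((b - b) / e) with 0 by (field; lra). rewrite (HQ0 k) by auto. rewrite Rmult_0_r. reflexivity.
  - destruct (Rle_dec b (b - e)); [lra|]. unfold H, c0.
    replace ((b - b) / e) with 0 by (field; lra). rewrite pow_inv.
    field. split; auto. apply pow_nonzero. lra.
  - intros k Hk. destruct (Rle_dec a (b - e)); [reflexivity|lra].
  - intros k Hk y Hy. destruct (Rle_dec y (b - e)).
    + rewrite Rabs_R0. auto.
    + unfold H, c0. unfold Icc in Hy.
      assert (Hs : -1 <= (y - b) / e <= 0).
      { split.
        - apply Rmult_le_reg_r with e; auto. unfold Rdiv. rewrite Rmult_assoc, Rinv_l by lra. lra.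
        - apply Rmult_le_reg_r with e; auto. unfold Rdiv. rewrite Rmult_assoc, Rinv_l by lra. lra. }
      assert (HMk := HM k ltac:(lia) _ Hs).
      rewrite !Rabs_mult. unfold Rdiv. rewrite Rabs_mult.
      rewrite (Rabs_right (e ^ p)) by (apply Rle_ge, pow_le; lra).
      rewrite (Rabs_right ((/ e) ^ k)) by (apply Rle_ge, pow_le; left; apply Rinv_0_lt_compat; lra).
      rewrite Rabs_inv.
      assert (Hpk := pow_inv_prod e k p ltac:(lra) ltac:(lia)).
      assert (HMM : Rabs (Q k ((y - b) * / e)) <= M').
      { unfold M'. unfold Rdiv in HMk. generalize (Rle_abs M). lra. }
      assert (0 <= (/ e) ^ k) by (apply pow_le; left; apply Rinv_0_lt_compat; lra).
      assert (0 <= e ^ p) by (apply pow_le; lra).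
      assert (0 < / Rabs (Q p 0)) by (apply Rinv_0_lt_compat; auto).
      apply Rle_lt_trans with (e * / Rabs (Q p 0) * M').
      * replace (e ^ p * / Rabs (Q p 0) * (/ e) ^ k * Rabs (Q k ((y - b) * / e)))
          with ((e ^ p * (/ e) ^ k) * / Rabs (Q p 0) * Rabs (Q k ((y - b) * / e))) by ring.
        apply Rmult_le_compat. 
        -- apply Rmult_le_pos; [apply Rmult_le_pos|]; lra.
        -- apply Rabs_pos.
        -- apply Rmult_le_compat_r; lra.
        -- auto.
      * apply Rle_lt_trans with (eta * Rabs (Q p 0) / (2 * M') * / Rabs (Q p 0) * M').
        -- apply Rmult_le_compat_r. lra. apply Rmult_le_compat_r; lra.
        -- replace (eta * Rabs (Q p 0) / (2 * M') * / Rabs (Q p 0) * M') with (eta / 2)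
             by (field; lra). lra.
Qed.
Lemma plus_minus_cancel {V : NormedModule R_AbsRing} (x y : V) : plus (minus x y) y = x.
Proof.
  unfold minus. rewrite <- plus_assoc. rewrite plus_opp_l. apply plus_zero_r.
Qed.

Lemma scal0V {V : NormedModule R_AbsRing} (v : V) : scal 0 v = zero.
Proof. exact (scal_zero_l v). Qed.

Lemma scal1V {V : NormedModule R_AbsRing} (v : V) : scal 1 v = v.
Proof. exact (scal_one v). Qed.

Lemma minus_selfV {V : NormedModule R_AbsRing} (x : V) : minus x x = zero.
Proof. apply minus_eq_zero. Qed.

Lemma minus_zero_zero {V : NormedModule R_AbsRing} : minus (zero : V) zero = zero.
Proof. apply minus_eq_zero. Qed.

Lemma plus_zero_zero {V : NormedModule R_AbsRing} : plus (zero : V) zero = zero.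
Proof. apply plus_zero_r. Qed.

Lemma CmAt_zero {V : NormedModule R_AbsRing} N D y : D y ->
  CmAt N D (fun _ _ => (zero : V)) y.
Proof.
  intros Dy.
  apply CmAt_ext with (g := fun k z => scal (zerofam k z) (zero : V)).
  - intros z _ k _. unfold zerofam. rewrite scal0V. reflexivity.
  - exact Dy.
  - apply CmAt_scal, CmAt_of_fam, fam_zero.
Qed.

Lemma corr_aux {V : NormedModule R_AbsRing} (a b : R) (N r : nat) : a < b ->
  forall q p, (p + q = S N)%nat -> (r < p)%nat ->
  forall (D : nat -> V) del, 0 < del -> (forall k, (k < p)%nat -> D k = zero) ->
  exists c : nat -> R -> V,
    (forall y, Icc a b y -> CmAt N (Icc a b) c y) /\
    (forall k, (k <= N)%nat -> c k b = D k) /\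
    (forall k, (k <= r)%nat -> c k a = zero) /\
    (forall k, (k <= r)%nat -> forall y, Icc a b y -> norm (c k y) < del).
Proof.
  intros Hab q. induction q as [|q IH]; intros p Hpq Hrp D del Hdel HD.
  - exists (fun _ _ => zero). split; [|split; [|split]].
    + intros y Hy. apply CmAt_zero. auto.
    + intros k Hk. symmetry. apply HD. lia.
    + auto.
    + intros k Hk y Hy. rewrite norm_zero. auto.
  - set (v := D p).
    set (eta := del / 2 / (norm v + 1)).
    assert (Hnv : 0 <= norm v) by apply norm_ge_0.
    assert (Heta : 0 < eta).
    { unfold eta. apply Rdiv_lt_0_compat. lra. lra. }
    destruct (bump a b N r p eta Hab Hrp ltac:(lia) Heta)
      as [h [Hh1 [Hh2 [Hh3 [Hh4 Hh5]]]]].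
    set (D' := fun k => minus (D k) (scal (h k b) v)).
    destruct (IH (S p) ltac:(lia) ltac:(lia) D' (del / 2) ltac:(lra)) as
      [c' [Hc1 [Hc2 [Hc3 Hc4]]]].
    { intros k Hk. unfold D'. destruct (Nat.eq_dec k p) as [->|Hne].
      - rewrite Hh3. rewrite scal1V. unfold v. apply minus_selfV.
      - rewrite HD by lia. rewrite Hh2 by lia. rewrite scal0V. apply minus_zero_zero. }
    exists (fun k y => plus (c' k y) (scal (h k y) v)). split; [|split; [|split]].
    + intros y Hy. apply CmAt_plus. auto. apply CmAt_scal. auto.
    + intros k Hk. rewrite Hc2 by auto. unfold D'. apply plus_minus_cancel.
    + intros k Hk. rewrite Hc3, Hh4 by auto. rewrite scal0V. apply plus_zero_zero.
    + intros k Hk y Hy. eapply Rle_lt_trans. apply norm_triangle.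
      specialize (Hc4 k Hk y Hy). specialize (Hh5 k Hk y Hy).
      assert (Hs := norm_scal (h k y) v).
      change (abs (h k y)) with (Rabs (h k y)) in Hs.
      assert (Hq : Rabs (h k y) * norm v <= del / 2).
      { apply Rle_trans with (eta * norm v).
        - apply Rmult_le_compat_r; lra.
        - unfold eta. apply Rle_trans with (del / 2 / (norm v + 1) * (norm v + 1)).
          + apply Rmult_le_compat_l. left. apply Rdiv_lt_0_compat; lra. lra.
          + right. field. lra. }
      apply Rle_lt_trans with (norm (c' k y) + del / 2).
      apply Rplus_le_compat_l. eapply Rle_trans; [exact Hs|exact Hq]. lra.
Qed.
Lemma Cm_on_mono {V : NormedModule R_AbsRing} N M a b (f : nat -> R -> V) :
  (N <= M)%nat -> Cm_on M a b f -> Cm_on N a b f.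
Proof.
  intros HNM H. apply Cm_on_of. intros Hab y Hy.
  apply CmAt_mono with M; auto. apply Cm_on_to; auto.
Qed.

Lemma mono_chain (x : nat -> R) n : (forall i, (i < n)%nat -> x i <= x (S i)) ->
  forall i j, (i <= j <= n)%nat -> x i <= x j.
Proof.
  intros H i j. induction j; intros Hij.
  - assert (i = 0%nat) by lia. subst. lra.
  - destruct (Nat.eq_dec i (S j)) as [->|Hne]. lra.
    apply Rle_trans with (x j). apply IHj. lia. apply H. lia.
Qed.

Lemma plus_minus_cancel' {V : NormedModule R_AbsRing} (a b : V) : plus a (minus b a) = b.
Proof. rewrite plus_comm. apply plus_minus_cancel. Qed.

Lemma minus_plus_l' {V : NormedModule R_AbsRing} (a c : V) : minus (plus a c) a = c.
Proof.
  unfold minus. rewrite plus_comm, plus_assoc, plus_opp_l, plus_comm. apply plus_zero_r.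
Qed.

Lemma norm_minus_self {V : NormedModule R_AbsRing} (a : V) : norm (minus a a) = 0.
Proof. rewrite minus_selfV. apply norm_zero. Qed.

Definition gen_stmt (V : NormedModule R_AbsRing) (r n : nat) : Prop :=
  forall (x : nat -> R) (fh : nat -> nat -> R -> V),
  (forall i, (i < n)%nat -> x i <= x (S i)) ->
  (forall j, (1 <= j <= n)%nat -> Cinf_on (x (j - 1)%nat) (x j) (fh j)) ->
  (forall i, (1 <= i <= n - 1)%nat -> forall k, (k <= i - 1 + r)%nat ->
       fh i k (x i) = fh (S i) k (x i)) ->
  forall delta : R, 0 < delta ->
  exists Fd : nat -> R -> V,
    Cm_on (n - 1 + r) (x 0%nat) (x n) Fd /\
    (forall k j, (1 <= j <= n)%nat -> (k <= j - 1 + r)%nat ->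
      forall y, Icc (x (j - 1)%nat) (x j) y ->
      norm (minus (Fd k y) (fh j k y)) < delta) /\
    (forall k, (k <= r)%nat -> Fd k (x 0%nat) = fh 1%nat k (x 0%nat)).

Lemma gen_small (V : NormedModule R_AbsRing) r n : (n <= 1)%nat -> gen_stmt V r n.
Proof.
  intros Hn x fh Hmono Hinf Hmatch delta Hdelta.
  exists (fh 1%nat). split; [|split].
  - destruct n as [|n].
    + intros H; lra.
    + assert (n = 0%nat) by lia. subst n. apply (Hinf 1%nat). lia.
  - intros k j Hj Hk y Hy. assert (j = 1%nat) by lia. subst j.
    rewrite norm_minus_self. auto.
  - auto.
Qed.

Lemma gen_all (V : NormedModule R_AbsRing) n : forall r, gen_stmt V r n.
Proof.
  induction n as [|n IH]; intros r.
  { apply gen_small. lia. }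
  destruct n as [|n]. { apply gen_small. lia. }
  intros x fh Hmono Hinf Hmatch delta Hdelta.
  destruct (IH (S r) (fun i => x (S i)) (fun j => fh (S j))) with (delta := delta)
    as [G [HG1 [HG2 HG3]]]; auto.
  { intros i Hi. apply Hmono. lia. }
  { intros j Hj. replace (S (j - 1)) with (S j - 1)%nat by lia. apply Hinf. lia. }
  { intros i Hi k Hk. apply (Hmatch (S i)). lia. lia. }
  simpl in HG1, HG2, HG3.
  set (N := (S n + r)%nat).
  replace (S (S n) - 1 + r)%nat with N by (unfold N; lia).
  replace (S n - 1 + S r)%nat with N in HG1 by (unfold N; lia).
  assert (Hch := mono_chain x (S (S n)) Hmono).
  assert (H01 : x 0%nat <= x 1%nat) by (apply Hmono; lia).
  assert (H1e : x 1%nat <= x (S (S n))) by (apply Hch; lia).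
  assert (Hm1 : forall k, (k <= r)%nat -> G k (x 1%nat) = fh 1%nat k (x 1%nat)).
  { intros k Hk. rewrite HG3 by lia. symmetry. apply (Hmatch 1%nat). lia. simpl. lia. }
  assert (HcG : forall Fd : nat -> R -> V,
    (forall k z, (k <= N)%nat -> Icc (x 1%nat) (x (S (S n))) z -> Fd k z = G k z) ->
    forall k j, (2 <= j <= S (S n))%nat -> (k <= j - 1 + r)%nat ->
      forall y, Icc (x (j - 1)%nat) (x j) y -> norm (minus (Fd k y) (fh j k y)) < delta).
  { intros Fd HFd k j Hj Hk y Hy.
    destruct j as [|j]; [lia|].
    rewrite HFd.
    - apply (HG2 k j). lia. lia. replace (S (j - 1)) with (S j - 1)%nat by lia. exact Hy.
    - unfold N; lia.
    - unfold Icc in *. split.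
      + apply Rle_trans with (x (S j - 1)%nat). apply Hch; lia. tauto.
      + apply Rle_trans with (x (S j)). tauto. apply Hch; lia. }
  destruct (Rle_lt_or_eq_dec _ _ H01) as [Hlt|Heq].
  -
    set (D := fun k => minus (G k (x 1%nat)) (fh 1%nat k (x 1%nat))).
    destruct (corr_aux (x 0%nat) (x 1%nat) N r Hlt (N - r)%nat (S r)
                ltac:(unfold N; lia) ltac:(lia) D delta Hdelta) as [c [Hc1 [Hc2 [Hc3 Hc4]]]].
    { intros k Hk. unfold D. rewrite Hm1 by lia. apply minus_selfV. }
    set (Fd := fun k y => if Rle_dec y (x 1%nat) then plus (fh 1%nat k y) (c k y) else G k y).
    assert (E1 : forall z, Icc (x 0%nat) (x 1%nat) z -> forall k, Fd k z = plus (fh 1%nat k z) (c k z)).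
    { intros z Hz k. unfold Fd. destruct (Rle_dec z (x 1%nat)); auto. unfold Icc in Hz; lra. }
    assert (E2 : forall k z, (k <= N)%nat -> Icc (x 1%nat) (x (S (S n))) z -> Fd k z = G k z).
    { intros k z Hk Hz. unfold Fd. destruct (Rle_dec z (x 1%nat)); auto.
      assert (z = x 1%nat) by (unfold Icc in Hz; lra). subst z.
      rewrite Hc2 by auto. unfold D. apply plus_minus_cancel'. }
    exists Fd. split; [|split].
    + apply Cm_on_of. intros Hlt2 y Hy. apply CmAt_glue with (m := x 1%nat); auto.
      * intros z Hz. apply CmAt_ext with (g := fun k z => plus (fh 1%nat k z) (c k z)).
        -- intros w Hw k _. apply E1; auto.
        -- auto.
        -- apply CmAt_plus; auto. apply Cm_on_to; auto. apply (Hinf 1%nat). lia.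
      * intros z Hz. apply CmAt_ext with (g := G).
        -- intros w Hw k Hk. apply E2; auto.
        -- auto.
        -- destruct (Rle_lt_or_eq_dec _ _ H1e) as [Hlt3|Heq3].
           ++ apply Cm_on_to; auto. eapply Cm_on_mono; [|exact HG1]; unfold N; lia.
           ++ rewrite <- Heq3 in Hz |- *.
              assert (z = x 1%nat) by (unfold Icc in Hz; lra). subst z.
              apply CmAt_point.
    + intros k j Hj Hk y Hy. destruct (Nat.eq_dec j 1) as [->|Hj1].
      * simpl in Hy, Hk. rewrite E1 by auto. rewrite minus_plus_l'. apply Hc4; auto.
      * apply HcG; auto. lia.
    + intros k Hk. rewrite E1. rewrite Hc3 by auto. apply plus_zero_r.
      unfold Icc; lra.
  -
    exists G. split; [|split].
    + rewrite Heq. eapply Cm_on_mono; [|exact HG1]; unfold N; lia.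
    + intros k j Hj Hk y Hy. destruct (Nat.eq_dec j 1) as [->|Hj1].
      * simpl in Hy, Hk. assert (y = x 1%nat) by (unfold Icc in Hy; lra). subst y.
        rewrite Hm1 by lia. rewrite norm_minus_self. auto.
      * apply HcG; auto. lia.
    + intros k Hk. rewrite Heq. apply Hm1; auto.
Qed.

Lemma approx_all (V : NormedModule R_AbsRing) : approx_statement V.
Proof.
  intros n x Hmono fh Hinf Hmatch delta Hdelta.
  destruct (gen_all V n 0%nat x fh Hmono Hinf) with (delta := delta) as [Fd [H1 [H2 H3]]]; auto.
  { intros i Hi k Hk. apply Hmatch; auto. lia. }
  exists Fd. split.
  - replace (n - 1)%nat with (n - 1 + 0)%nat by lia. exact H1.
  - intros k Hk j Hj y Hy. apply H2; auto. lia. lia.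
Qed.

Theorem mainTheorem12 :
  approx_statement R_NormedModule /\ approx_statement C_R_NormedModule.
Proof. split; apply approx_all. Qed.
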